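(* Let $Q$ be a quadrilateral in $K^2$. (1) Every $Q$-orthogonal pair $\{\ell_1,\ell_2\}$ of bisectors of $Q$ such that $\ell_1$ and $\ell_2$ are not both parallel to a pair of parallel sides or parallel diagonals of $Q$ is $Q$-antipodal, and hence is a $Q$-pair. (2) Every $Q$-antipodal pair of bisectors of $Q$ that do not share a midpoint is $Q$-orthogonal, and hence is a $Q$-pair.
   Context: $K$ is a field of characteristic $\neq 2$. Every line $L$ in $K^2$ has an equation $tX-uY+v=0$ normalized so that $t=1$ if $u=0$ and $u=1$ if $u\neq 0$; coefficients denoted $t_L,u_L,v_L$. A quadrilateral $Q=ABA'B'$ consists of four distinct lines $A,B,A',B'$ (sides), not all through one point, with adjacent sides ($A,B$; $B,A'$; $A',B'$; $B',A$) not parallel; opposite sides may be parallel. Vertices: $A\cap B$, $B\cap A'$, $A'\cap B'$, $B'\cap A$ (two may coincide if three sides are concurrent). Diagonals: the lines through nonadjacent vertices. The centroid is the average of the four vertices. Let $\alpha=t_Au_Bu_{A'}u_{B'}-u_At_Bu_{A'}u_{B'}+u_Au_Bt_{A'}u_{B'}-u_Au_Bu_{A'}t_{B'}$, $\beta=t_Au_Bt_{A'}u_{B'}-u_At_Bu_{A'}t_{B'}$, $\gamma=t_At_Bt_{A'}u_{B'}-t_At_Bu_{A'}t_{B'}+t_Au_Bt_{A'}t_{B'}-u_At_Bt_{A'}t_{B'}$, and $\langle \mathbf v,\mathbf w\rangle_Q=\mathbf v^T\begin{pmatrix}\gamma&-\beta\\-\beta&\alpha\end{pmatrix}\mathbf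 w$. Lines $\ell_1,\ell_2$ are $Q$-orthogonal if $\langle (u_{\ell_1},t_{\ell_1}),(u_{\ell_2},t_{\ell_2})\rangle_Q=0$. A line $\ell$ crosses a pair $\{\ell_1,\ell_2\}$ if distinct from both and not parallel to both; $\mathrm{mid}_{\{\ell_1,\ell_2\}}(\ell)$ is the midpoint of the points where $\ell$ meets $\ell_1,\ell_2$ (the point at infinity of $\ell$ if one is at infinity). $\ell$ bisects $Q$ (is a bisector) if $\mathrm{mid}_{\mathsf P}(\ell)$ is the same for all pairs $\mathsf P$ among $\{A,A'\},\{B,B'\}$ that $\ell$ crosses; this common point is the midpoint of the bisector. A pair $\{\ell_1,\ell_2\}$ of bisectors (possibly $\ell_1=\ell_2$) is $Q$-antipodal if the midpoint of their midpoints is the centroid of $Q$, and is a $Q$-pair if it is both $Q$-antipodal and $Q$-orthogonal. *)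

(* Defs.v *)
From mathcomp Require Import all_boot all_order all_algebra.
Set Implicit Arguments. Unset Strict Implicit. Unset Printing Implicit Defensive.
Import Order.TTheory GRing.Theory Num.Theory.
Local Open Scope ring_scope.

Section Geometry.
Variable K : fieldType.

Definition point := (K * K)%type.

(* A line  t X - u Y + v = 0, normalized: t = 1 if u = 0, and u = 1 if u <> 0. *)
Record line := Line {
  lt : K; lu : K; lv : K;
  line_norm : ((lu == 0) && (lt == 1)) || (lu == 1) }.

Definition on_line (p : point) (l : line) : Prop :=
  lt l * p.1 - lu l * p.2 + lv l = 0.

Lemma mkline_norm0 : ((0 : K) == 0) && ((1 : K) == 1) || ((0 : K) == 1).
Proof. by rewrite !eqxx. Qed.
Lemma mkline_norm1 (t : K) : ((1 : K) == 0) && (t == 1) || ((1 : K) == 1).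
Proof. by rewrite eqxx orbT. Qed.
Definition mkline (t u v : K) : line :=
  if u == 0 then @Line 1 0 (v / t) mkline_norm0
  else @Line (t / u) 1 (v / u) (mkline_norm1 (t / u)).

Definition line_through (p q : point) : line :=
  mkline (q.2 - p.2) (q.1 - p.1) ((q.1 - p.1) * p.2 - (q.2 - p.2) * p.1).

(* parallel = same direction (normalized (t,u) coincide); includes equality *)
Definition parallel (l m : line) : bool := (lt l == lt m) && (lu l == lu m).

(* intersection point of two non-parallel lines (Cramer's rule) *)
Definition meet (l m : line) : point :=
  let D := lu l * lt m - lt l * lu m in
  ((lv l * lu m - lu l * lv m) / D, (lt m * lv l - lt l * lv m) / D).

Definition midpt (p q : point) : point := ((p.1 + q.1) / 2%:R, (p.2 + q.2) / 2%:R).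

Definition quadrilateral (A B A' B' : line) : Prop :=
  [/\ (A <> B /\ A <> A' /\ A <> B' /\ B <> A' /\ B <> B' /\ A' <> B'),
      ~ (exists p : point, [/\ on_line p A, on_line p B, on_line p A' & on_line p B']) &
      [/\ ~ parallel A B, ~ parallel B A', ~ parallel A' B' & ~ parallel B' A]].

Definition vtx1 (A B A' B' : line) : point := meet A B.
Definition vtx2 (A B A' B' : line) : point := meet B A'.
Definition vtx3 (A B A' B' : line) : point := meet A' B'.
Definition vtx4 (A B A' B' : line) : point := meet B' A.

Definition diag1 (A B A' B' : line) : line :=
  line_through (vtx1 A B A' B') (vtx3 A B A' B').
Definition diag2 (A B A' B' : line) : line :=
  line_through (vtx2 A B A' B') (vtx4 A B A' B').

Definition centroid (A B A' B' : line) : point :=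
  let p1 := vtx1 A B A' B' in let p2 := vtx2 A B A' B' in
  let p3 := vtx3 A B A' B' in let p4 := vtx4 A B A' B' in
  ((p1.1 + p2.1 + p3.1 + p4.1) / 4%:R, (p1.2 + p2.2 + p3.2 + p4.2) / 4%:R).

Definition qalpha (A B A' B' : line) : K :=
  lt A * lu B * lu A' * lu B' - lu A * lt B * lu A' * lu B'
  + lu A * lu B * lt A' * lu B' - lu A * lu B * lu A' * lt B'.
Definition qbeta (A B A' B' : line) : K :=
  lt A * lu B * lt A' * lu B' - lu A * lt B * lu A' * lt B'.
Definition qgamma (A B A' B' : line) : K :=
  lt A * lt B * lt A' * lu B' - lt A * lt B * lu A' * lt B'
  + lt A * lu B * lt A' * lt B' - lu A * lt B * lt A' * lt B'.

Definition qform (A B A' B' : line) (v w : K * K) : K :=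
  v.1 * (qgamma A B A' B' * w.1 - qbeta A B A' B' * w.2)
  + v.2 * (- qbeta A B A' B' * w.1 + qalpha A B A' B' * w.2).

Definition Qorthogonal (A B A' B' : line) (l1 l2 : line) : Prop :=
  qform A B A' B' (lu l1, lt l1) (lu l2, lt l2) = 0.

Definition crosses (l l1 l2 : line) : Prop :=
  [/\ l <> l1, l <> l2 & ~ (parallel l l1 /\ parallel l l2)].

(* mid_{l1,l2}(l): None stands for the point at infinity of l *)
Definition mid (l1 l2 l : line) : option point :=
  if parallel l l1 || parallel l l2 then None
  else Some (midpt (meet l l1) (meet l l2)).

Definition bisector_mid (A B A' B' : line) (l : line) (m : option point) : Prop :=
  [/\ crosses l A A' -> mid A A' l = m,
      crosses l B B' -> mid B B' l = m &
      crosses l A A' \/ crosses l B B'].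

Definition bisector (A B A' B' : line) (l : line) : Prop :=
  exists m, bisector_mid A B A' B' l m.

Definition Qantipodal (A B A' B' : line) (l1 l2 : line) : Prop :=
  exists m1 m2 : point,
    [/\ bisector_mid A B A' B' l1 (Some m1), bisector_mid A B A' B' l2 (Some m2)
      & midpt m1 m2 = centroid A B A' B'].

Definition Qpair (A B A' B' : line) (l1 l2 : line) : Prop :=
  Qantipodal A B A' B' l1 l2 /\ Qorthogonal A B A' B' l1 l2.

Definition both_par_to_parallel_pair (A B A' B' : line) (l1 l2 : line) : Prop :=
  [\/ [/\ parallel A A', parallel l1 A & parallel l2 A],
      [/\ parallel B B', parallel l1 B & parallel l2 B] |
      [/\ parallel (diag1 A B A' B') (diag2 A B A' B'),
          parallel l1 (diag1 A B A' B') & parallel l2 (diag1 A B A' B')]].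

End Geometry.

(* Main.v *)
Require Import Defs.
From mathcomp Require Import all_boot all_order all_algebra.
From mathcomp Require Import ring.
From Stdlib Require Import Classical.
Set Implicit Arguments. Unset Strict Implicit. Unset Printing Implicit Defensive.
Import GRing.Theory.
Local Open Scope ring_scope.

Section Aux.
Variable K : fieldType.
Implicit Types (l n X Y : line K) (p m : point K) (d v w : (K * K)%type).

Definition Lp l p := lt l * p.1 - lu l * p.2 + lv l.
Definition dir l : (K * K)%type := (lu l, lt l).
Definition det2 v w := v.1 * w.2 - v.2 * w.1.
Definition psi X Y p : (K * K)%type :=
  (Lp X p * lu Y + Lp Y p * lu X, Lp X p * lt Y + Lp Y p * lt X).
Definition nz v := v.1 != 0 \/ v.2 != 0.
Definition EE X Y p d := det2 (psi X Y p) d.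

Lemma par_cross l (m : line K) : parallel l m = (det2 (dir l) (dir m) == 0).
Proof.
case: l => t u v /= H; case: m => t' u' v' /= H'.
rewrite /parallel /det2 /=.
case/orP: H => [/andP[/eqP-> /eqP->]|/eqP->];
case/orP: H' => [/andP[/eqP-> /eqP->]|/eqP->].
- by rewrite !eqxx mul0r mulr0 subrr eqxx.
- by rewrite mul0r mul1r sub0r oppr_eq0 oner_eq0 [0 == 1]eq_sym oner_eq0 andbF.
- by rewrite mul1r mulr0 subr0 oner_eq0 andbF.
- by rewrite eqxx andbT mul1r mulr1 subr_eq0 eq_sym.
Qed.

Lemma dir_nz l : nz (dir l).
Proof.
case: l => t u v /= H; rewrite /nz /=.
case/orP: H => [/andP[_ /eqP->]|/eqP->]; [right|left]; exact: oner_neq0.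
Qed.

Lemma npar l (m : line K) : ~~ parallel l m -> det2 (dir l) (dir m) != 0.
Proof. by rewrite par_cross. Qed.

Lemma Lp_meet1 l (m : line K) : ~~ parallel l m -> Lp l (meet l m) = 0.
Proof.
move=> /npar h; rewrite /Lp /meet /=; move: h; rewrite /det2 /dir /= => h.
field. exact: h.
Qed.

Lemma Lp_meet2 l (m : line K) : ~~ parallel l m -> Lp m (meet l m) = 0.
Proof.
move=> /npar h; rewrite /Lp /meet /=; move: h; rewrite /det2 /dir /= => h.
field. exact: h.
Qed.

Lemma EE_exp X Y p d :
  EE X Y p d = Lp X p * det2 (dir Y) d + Lp Y p * det2 (dir X) d.
Proof. rewrite /EE /det2 /psi /dir /=; ring. Qed.


Lemma det2_anti v w : det2 v w = - det2 w v.
Proof. rewrite /det2; ring. Qed.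

Lemma par_refl l : parallel l l.
Proof. by rewrite /parallel !eqxx. Qed.

Lemma par_sym l (m : line K) : parallel l m -> parallel m l.
Proof. by rewrite /parallel => /andP[/eqP-> /eqP->]; rewrite !eqxx. Qed.

Lemma par_trans l (m : line K) n : parallel l m -> parallel m n -> parallel l n.
Proof. by rewrite /parallel => /andP[/eqP-> /eqP->]. Qed.

Lemma pair_eq (h2 : (2%:R : K) != 0) X Y l m :
  crosses l X Y -> mid X Y l = Some m -> Lp l m = 0 /\ EE X Y m (dir l) = 0.
Proof.
case=> _ _ _; rewrite /mid.
case E: (parallel l X || parallel l Y) => //; case=> <-.
move/norP: E => [/npar h1 /npar h2']; move: h1 h2'; rewrite /det2 /dir /= => h1 h2'.
split; rewrite /EE /Lp /psi /midpt /meet /det2 /dir /Lp /=; field; by rewrite ?h1 ?h2' ?h2.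
Qed.

Lemma notcross X Y l : ~ crosses l X Y -> l = X \/ l = Y \/ (parallel l X /\ parallel l Y).
Proof.
move=> hc; case: (classic (l = X)) => [->|nX]; first by left.
case: (classic (l = Y)) => [->|nY]; first by right; left.
right; right; apply: NNPP => hn; apply: hc; split => //.
Qed.

Lemma pair_nc X Y l m : ~ crosses l X Y -> Lp l m = 0 -> EE X Y m (dir l) = 0.
Proof.
move=> /notcross hc hl; rewrite EE_exp.
case: hc => [E|[E|[pX pY]]]; subst.
- rewrite hl /det2; ring.
- rewrite hl /det2; ring.
- move: pX pY; rewrite !par_cross => /eqP pX /eqP pY.
  by rewrite (det2_anti (dir Y)) (det2_anti (dir X)) pX pY oppr0 !mulr0 addr0.
Qed.

Lemma bis_eqs (h2 : (2%:R : K) != 0) A B A' B' l m :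
  bisector_mid A B A' B' l (Some m) ->
  [/\ Lp l m = 0, EE A A' m (dir l) = 0 & EE B B' m (dir l) = 0].
Proof.
case=> hA hB hc.
have hl : Lp l m = 0.
  by case: hc => c; [case: (pair_eq h2 c (hA c))|case: (pair_eq h2 c (hB c))].
split => //.
- case: (classic (crosses l A A')) => c; [by case: (pair_eq h2 c (hA c))| exact: pair_nc].
- case: (classic (crosses l B B')) => c; [by case: (pair_eq h2 c (hB c))| exact: pair_nc].
Qed.

Lemma par_or X Y l mm : (crosses l X Y -> mid X Y l = mm) -> mm = None ->
  parallel l X || parallel l Y.
Proof.
move=> h E; subst.
case: (classic (crosses l X Y)) => c.
  by move: (h c); rewrite /mid; case: ifP.
case: (notcross c) => [->|[->|[-> _]]] //; by rewrite par_refl ?orbT.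
Qed.

Lemma bis_some A B A' B' l : quadrilateral A B A' B' -> bisector A B A' B' l ->
  exists m, bisector_mid A B A' B' l (Some m).
Proof.
case=> _ _ [nAB nBA' nA'B' nB'A] [[m|] hm]; first by exists m.
exfalso; case: hm => hA hB _.
move: (par_or hA erefl) (par_or hB erefl).
case/orP=> h1; case/orP=> h2.
- by apply: nAB; apply: par_trans (par_sym h1) h2.
- by apply: nB'A; apply: par_trans (par_sym h2) h1.
- by apply: nBA'; apply: par_trans (par_sym h2) h1.
- by apply: nA'B'; apply: par_trans (par_sym h1) h2.
Qed.


Lemma mk_par l (t u v : K) : (t != 0 \/ u != 0) -> lt l * u - lu l * t = 0 ->
  parallel l (mkline t u v).
Proof.
move=> htu h; rewrite /mkline /parallel; case: ifP => [/eqP u0|/negbT un0] /=.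
- have t0 : t != 0 by case: htu => //; rewrite u0 eqxx.
  move: h; rewrite u0 mulr0 sub0r => /eqP; rewrite oppr_eq0 mulf_eq0 (negbTE t0) orbF => lu0.
  case/orP: (line_norm l) => [/andP[_ ->]|/eqP l1]; first by rewrite lu0.
  by move: lu0; rewrite l1 oner_eq0.
- case/orP: (line_norm l) => [/andP[/eqP l0 /eqP l1]|/eqP l1].
    by move: h; rewrite l0 l1 mul1r mul0r subr0 => u0'; move: un0; rewrite u0' eqxx.
  rewrite l1 eqxx andbT; apply/eqP.
  move: h; rewrite l1 mul1r => /eqP; rewrite subr_eq0 => /eqP ht.
  by rewrite -ht mulfK.
Qed.

Lemma diag_par (P Q : point K) l : P <> Q ->
  det2 (Q.1 - P.1, Q.2 - P.2) (dir l) = 0 -> parallel l (line_through P Q).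
Proof.
move=> hPQ hd; rewrite /line_through; apply: mk_par.
  case: (boolP (Q.2 - P.2 == 0)) => [/eqP e2|e2]; last by left.
  case: (boolP (Q.1 - P.1 == 0)) => [/eqP e1|e1]; last by right.
  exfalso; apply: hPQ; move: e1 e2; clear hd; case: P => p1 p2; case: Q => q1 q2 /=.
  by move=> /eqP; rewrite subr_eq0 => /eqP -> /eqP; rewrite subr_eq0 => /eqP ->.
by move: hd; rewrite /det2 /dir /= => hd; rewrite -hd; ring.
Qed.

Section Quad.
Variables (A B A' B' : line K).

Definition qf := qform A B A' B'.
Definition cen := centroid A B A' B'.
Definition mstar p : point K := (2%:R * cen.1 - p.1, 2%:R * cen.2 - p.2).
Definition GG p := det2 (psi A A' p) (psi B B' p).

Definition N1 X Y d := lt X * det2 (dir Y) d + lt Y * det2 (dir X) d.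
Definition N2 X Y d := - (lu X * det2 (dir Y) d + lu Y * det2 (dir X) d).
Definition W X Y d := lv X * det2 (dir Y) d + lv Y * det2 (dir X) d.
Definition Dl d := N1 A A' d * N2 B B' d - N2 A A' d * N1 B B' d.
Definition P1 d := N2 A A' d * W B B' d - W A A' d * N2 B B' d.
Definition P2 d := N1 B B' d * W A A' d - N1 A A' d * W B B' d.

Lemma EE_lin X Y p d : EE X Y p d = N1 X Y d * p.1 + N2 X Y d * p.2 + W X Y d.
Proof. rewrite /EE /N1 /N2 /W /psi /det2 /Lp /dir /=; ring. Qed.

Lemma cramer p d : EE A A' p d = 0 -> EE B B' p d = 0 ->
  Dl d * p.1 = P1 d /\ Dl d * p.2 = P2 d.
Proof.
rewrite !EE_lin => hA hB; split.
- have -> : Dl d * p.1 = P1 d + (N2 B B' d * (N1 A A' d * p.1 + N2 A A' d * p.2 + W A A' d)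
     - N2 A A' d * (N1 B B' d * p.1 + N2 B B' d * p.2 + W B B' d)).
    by rewrite /Dl /P1; ring.
  by rewrite hA hB !mulr0 subrr addr0.
- have -> : Dl d * p.2 = P2 d + (N1 A A' d * (N1 B B' d * p.1 + N2 B B' d * p.2 + W B B' d)
     - N1 B B' d * (N1 A A' d * p.1 + N2 A A' d * p.2 + W A A' d)).
    by rewrite /Dl /P2; ring.
  by rewrite hA hB !mulr0 subrr addr0.
Qed.

Lemma Dl_q d : Dl d = - 2%:R * qf d d.
Proof.
rewrite /Dl /qf /qform /qalpha /qbeta /qgamma /N1 /N2 /det2 /dir /=; ring.
Qed.

Lemma detq : qalpha A B A' B' * qgamma A B A' B' - qbeta A B A' B' ^+ 2 =
  - (det2 (dir A) (dir B) * det2 (dir B) (dir A') * det2 (dir A') (dir B') * det2 (dir B') (dir A)).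
Proof. rewrite /qalpha /qbeta /qgamma /det2 /dir /=; ring. Qed.

Lemma qf_sym v w : qf v w = qf w v.
Proof. rewrite /qf /qform; ring. Qed.


Lemma four_nz (h2 : (2%:R : K) != 0) : (4%:R : K) != 0.
Proof. by rewrite (_ : 4%:R = 2%:R * 2%:R :> K) ?mulf_neq0 // -natrM. Qed.

Section Ids.
Hypotheses (h2 : (2%:R : K) != 0) (hAB : lu A * lt B - lt A * lu B != 0)
  (hBA' : lu B * lt A' - lt B * lu A' != 0) (hA'B' : lu A' * lt B' - lt A' * lu B' != 0)
  (hB'A : lu B' * lt A - lt B' * lu A != 0).
Let h4 := four_nz h2.

Ltac idtac_field :=
  rewrite /GG /qf /qform /qalpha /qbeta /qgamma /mstar /cen /centroid /vtx1 /vtx2 /vtx3 /vtx4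
     /meet /psi /Lp /det2 /=;
  field; by rewrite ?h2 ?h4 ?hAB ?hBA' ?hA'B' ?hB'A.

Lemma id_AA p : qf (psi A A' p) (psi A A' (mstar p)) =
  (lt A * lu A' - lu A * lt A')^+2 / 2%:R * GG p.
Proof. idtac_field. Qed.

Lemma id_BB p : qf (psi B B' p) (psi B B' (mstar p)) =
  (lt B * lu B' - lu B * lt B')^+2 / 2%:R * GG p.
Proof. idtac_field. Qed.

Lemma id_AB p : qf (psi A A' p) (psi B B' (mstar p)) =
  - ((lt A * lu B - lu A * lt B) * (lt A' * lu B' - lu A' * lt B')
     + (lt A * lu B' - lu A * lt B') * (lt A' * lu B - lu A' * lt B)) / 2%:R * GG p.
Proof. idtac_field. Qed.

Lemma id_BA p : qf (psi B B' p) (psi A A' (mstar p)) =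
  - ((lt A * lu B - lu A * lt B) * (lt A' * lu B' - lu A' * lt B')
     + (lt A * lu B' - lu A * lt B') * (lt A' * lu B - lu A' * lt B)) / 2%:R * GG p.
Proof. idtac_field. Qed.


End Ids.

Lemma psi_zero X Y p : (psi X Y p).1 = 0 -> (psi X Y p).2 = 0 ->
  (parallel X Y /\ Lp X p + Lp Y p = 0) \/ (~~ parallel X Y /\ Lp X p = 0 /\ Lp Y p = 0).
Proof.
rewrite /psi /= => h1 h2.
case P: (parallel X Y).
- left; split => //; move: P; rewrite /parallel => /andP[/eqP et /eqP eu].
  move: h1 h2; rewrite -et -eu => h1 h2.
  case: (dir_nz X); rewrite /dir /= => hn.
  + by apply/eqP; rewrite -(mulIr_eq0 _ (mulIf hn)) /=; apply/eqP; rewrite -h1; ring.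
  + by apply/eqP; rewrite -(mulIr_eq0 _ (mulIf hn)) /=; apply/eqP; rewrite -h2; ring.
- right; split => //; have := npar (negbT P); rewrite /det2 /dir /= => hD.
  split.
  + apply/eqP; rewrite -(mulIr_eq0 _ (mulIf hD)) /=; apply/eqP.
    have -> : Lp X p * (lu X * lt Y - lt X * lu Y) =
      lu X * (Lp X p * lt Y + Lp Y p * lt X) - lt X * (Lp X p * lu Y + Lp Y p * lu X) by ring.
    by rewrite h1 h2 !mulr0 subrr.
  + apply/eqP; rewrite -(mulIr_eq0 _ (mulIf hD)) /=; apply/eqP.
    have -> : Lp Y p * (lu X * lt Y - lt X * lu Y) =
      lt Y * (Lp X p * lu Y + Lp Y p * lu X) - lu Y * (Lp X p * lt Y + Lp Y p * lt X) by ring.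
    by rewrite h1 h2 !mulr0 subrr.
Qed.


Lemma solve_v l p : Lp l p = 0 -> lv l = lu l * p.2 - lt l * p.1.
Proof. rewrite /Lp => h; apply/eqP; rewrite -subr_eq0 -h; apply/eqP; ring. Qed.

Lemma solve_v2 X Y p : lt Y = lt X -> lu Y = lu X -> Lp X p + Lp Y p = 0 ->
  lv Y = 2%:R * (lu X * p.2 - lt X * p.1) - lv X.
Proof.
rewrite /Lp => -> -> h; apply/eqP; rewrite -subr_eq0 -h; apply/eqP; ring.
Qed.

Lemma sing_cen (h2 : (2%:R : K) != 0) (hQ : quadrilateral A B A' B') p :
  (psi A A' p).1 = 0 -> (psi A A' p).2 = 0 ->
  (psi B B' p).1 = 0 -> (psi B B' p).2 = 0 -> p = cen.
Proof.
move=> a1 a2 b1 b2.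
have h4 := four_nz h2.
case: hQ => _ hnc [/negP/npar nAB /negP/npar nBA' /negP/npar nA'B' /negP/npar nB'A].
move: nAB nBA' nA'B' nB'A; rewrite /det2 /dir /= => nAB nBA' nA'B' nB'A.
case: (psi_zero a1 a2) => [[pA sA]|[_ [lA lA']]];
case: (psi_zero b1 b2) => [[pB sB]|[_ [lB lB']]].
- move: pA pB => /andP[/eqP eAt /eqP eAu] /andP[/eqP eBt /eqP eBu].
  have vA' := solve_v2 (esym eAt) (esym eAu) sA.
  have vB' := solve_v2 (esym eBt) (esym eBu) sB.
  move: nBA' nA'B' nB'A; rewrite -eAt -eAu -eBt -eBu => nBA' nA'B' nB'A.
  rewrite /cen /centroid /vtx1 /vtx2 /vtx3 /vtx4 /meet /=.
  rewrite -eAt -eAu -eBt -eBu vA' vB'.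
  case: p {a1 a2 b1 b2 sA sB vA' vB'} => x y /=.
  by congr pair; field; rewrite ?h2 ?h4 ?nAB ?nBA' ?nA'B' ?nB'A.
- move: pA => /andP[/eqP eAt /eqP eAu].
  have vA' := solve_v2 (esym eAt) (esym eAu) sA.
  have vB := solve_v lB; have vB' := solve_v lB'.
  move: nBA' nA'B'; rewrite -eAt -eAu => nBA' nA'B'.
  rewrite /cen /centroid /vtx1 /vtx2 /vtx3 /vtx4 /meet /=.
  rewrite -eAt -eAu vA' vB vB'.
  case: p {a1 a2 b1 b2 sA vA' vB vB' lB lB'} => x y /=.
  by congr pair; field; rewrite ?h2 ?h4 ?nAB ?nBA' ?nA'B' ?nB'A.
- move: pB => /andP[/eqP eBt /eqP eBu].
  have vB' := solve_v2 (esym eBt) (esym eBu) sB.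
  have vA := solve_v lA; have vA' := solve_v lA'.
  move: nA'B' nB'A; rewrite -eBt -eBu => nA'B' nB'A.
  rewrite /cen /centroid /vtx1 /vtx2 /vtx3 /vtx4 /meet /=.
  rewrite -eBt -eBu vB' vA vA'.
  case: p {a1 a2 b1 b2 sB vA' vA vB' lA lA'} => x y /=.
  by congr pair; field; rewrite ?h2 ?h4 ?nAB ?nBA' ?nA'B' ?nB'A.
- by exfalso; apply: hnc; exists p; split.
Qed.


Lemma det2_com v w d : det2 v d = 0 -> det2 w d = 0 -> nz d -> det2 v w = 0.
Proof.
move=> hv hw [hd|hd]; apply/eqP; rewrite -(mulIr_eq0 _ (mulIf hd)) /=; apply/eqP.
- have -> : det2 v w * d.1 = w.1 * det2 v d - v.1 * det2 w d by rewrite /det2; ring.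
  by rewrite hv hw !mulr0 subrr.
- have -> : det2 v w * d.2 = w.2 * det2 v d - v.2 * det2 w d by rewrite /det2; ring.
  by rewrite hv hw !mulr0 subrr.
Qed.

Lemma orth2 wv x y : wv.1 * x.1 + wv.2 * x.2 = 0 -> wv.1 * y.1 + wv.2 * y.2 = 0 ->
  nz wv -> det2 x y = 0.
Proof.
move=> hx hy [hd|hd]; apply/eqP; rewrite -(mulIr_eq0 _ (mulIf hd)) /=; apply/eqP.
- have -> : det2 x y * wv.1 = y.2 * (wv.1 * x.1 + wv.2 * x.2) - x.2 * (wv.1 * y.1 + wv.2 * y.2)
    by rewrite /det2; ring.
  by rewrite hx hy !mulr0 subrr.
- have -> : det2 x y * wv.2 = x.1 * (wv.1 * y.1 + wv.2 * y.2) - y.1 * (wv.1 * x.1 + wv.2 * x.2)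
    by rewrite /det2; ring.
  by rewrite hx hy !mulr0 subrr.
Qed.

Lemma qscale v d x : det2 v d = 0 -> nz v -> qf v x = 0 -> qf d x = 0.
Proof.
move=> hvd [hv|hv] hq; apply/eqP; rewrite -(mulIr_eq0 _ (mulIf hv)) /=; apply/eqP.
- have -> : qf d x * v.1 = d.1 * qf v x +
     (- qbeta A B A' B' * x.1 + qalpha A B A' B' * x.2) * det2 v d
    by rewrite /qf /qform /det2; ring.
  by rewrite hq hvd !mulr0 addr0.
- have -> : qf d x * v.2 = d.2 * qf v x -
     (qgamma A B A' B' * x.1 - qbeta A B A' B' * x.2) * det2 v d
    by rewrite /qf /qform /det2; ring.
  by rewrite hq hvd !mulr0 subr0.
Qed.

Lemma qkernel d x y : nz d ->
  qalpha A B A' B' * qgamma A B A' B' - qbeta A B A' B' ^+ 2 != 0 ->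
  qf d x = 0 -> qf d y = 0 -> det2 x y = 0.
Proof.
move=> hd hdet hx hy.
set g : (K * K)%type := (qgamma A B A' B' * d.1 - qbeta A B A' B' * d.2,
                          - qbeta A B A' B' * d.1 + qalpha A B A' B' * d.2).
have ex : g.1 * x.1 + g.2 * x.2 = 0 by rewrite -hx /g /qf /qform /=; ring.
have ey : g.1 * y.1 + g.2 * y.2 = 0 by rewrite -hy /g /qf /qform /=; ring.
apply: (orth2 ex ey).
case: (boolP (g.1 == 0)) => [/eqP g1|g1]; last by left.
case: (boolP (g.2 == 0)) => [/eqP g2|g2]; last by right.
exfalso; case: hd => hd; move: hd; apply/negP; rewrite negbK.
- rewrite -(mulIr_eq0 _ (mulIf hdet)) /=.
  have -> : d.1 * (qalpha A B A' B' * qgamma A B A' B' - qbeta A B A' B' ^+ 2) =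
     qalpha A B A' B' * g.1 + qbeta A B A' B' * g.2 by rewrite /g /=; ring.
  by rewrite g1 g2 !mulr0 addr0.
- rewrite -(mulIr_eq0 _ (mulIf hdet)) /=.
  have -> : d.2 * (qalpha A B A' B' * qgamma A B A' B' - qbeta A B A' B' ^+ 2) =
     qbeta A B A' B' * g.1 + qgamma A B A' B' * g.2 by rewrite /g /=; ring.
  by rewrite g1 g2 !mulr0 addr0.
Qed.


Lemma Nd X Y d : N1 X Y d * d.1 + N2 X Y d * d.2 =
  - 2%:R * (det2 (dir Y) d * det2 (dir X) d).
Proof. rewrite /N1 /N2 /det2 /dir /=; ring. Qed.

Lemma N0_par (h2 : (2%:R : K) != 0) X Y l :
  N1 X Y (dir l) = 0 -> N2 X Y (dir l) = 0 -> parallel X Y /\ parallel l X.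
Proof.
move=> e1 e2.
case P: (parallel X Y).
- split => //; move: (P) => /andP[/eqP et /eqP eu].
  have ha : det2 (dir X) (dir l) = 0.
    case: (dir_nz X) => hn; apply/eqP;
      rewrite -(mulIr_eq0 _ (mulIf hn)) -(mulIr_eq0 _ (mulIf h2)); apply/eqP.
    + have -> : det2 (dir X) (dir l) * (dir X).1 * 2%:R = - N2 X Y (dir l)
        by rewrite /N2 /dir /det2 /= -et -eu; ring.
      by rewrite e2 oppr0.
    + have -> : det2 (dir X) (dir l) * (dir X).2 * 2%:R = N1 X Y (dir l)
        by rewrite /N1 /dir /det2 /= -et -eu; ring.
      by rewrite e1.
  by rewrite par_cross det2_anti ha oppr0 eqxx.
- exfalso; move: (npar (negbT P)) => hD.
  have ha' : det2 (dir X) (dir l) = 0.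
    apply/eqP; rewrite -(mulIr_eq0 _ (mulIf hD)); apply/eqP.
    have -> : det2 (dir X) (dir l) * det2 (dir X) (dir Y) =
      lu X * N1 X Y (dir l) + lt X * N2 X Y (dir l) by rewrite /N1 /N2 /dir /det2 /=; ring.
    by rewrite e1 e2 !mulr0 addr0.
  have ha : det2 (dir Y) (dir l) = 0.
    apply/eqP; rewrite -(mulIr_eq0 _ (mulIf hD)); apply/eqP.
    have -> : det2 (dir Y) (dir l) * det2 (dir X) (dir Y) =
      - (lt Y * N2 X Y (dir l) + lu Y * N1 X Y (dir l)) by rewrite /N1 /N2 /dir /det2 /=; ring.
    by rewrite e1 e2 !mulr0 addr0 oppr0.
  have pX : parallel l X by rewrite par_cross det2_anti ha' oppr0 eqxx.
  have pY : parallel l Y by rewrite par_cross det2_anti ha oppr0 eqxx.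
  by move: P; rewrite (par_trans (par_sym pX) pY).
Qed.

Lemma w_zero X Y (x y : K) : det2 (dir X) (dir Y) != 0 ->
  x * lt X - y * lt Y = 0 -> x * lu X - y * lu Y = 0 -> x = 0 /\ y = 0.
Proof.
move=> hD e1 e2; split; apply/eqP; rewrite -(mulIr_eq0 _ (mulIf hD)); apply/eqP.
- have -> : x * det2 (dir X) (dir Y) = lt Y * (x * lu X - y * lu Y) - lu Y * (x * lt X - y * lt Y)
    by rewrite /det2 /dir /=; ring.
  by rewrite e1 e2 !mulr0 subrr.
- have -> : y * det2 (dir X) (dir Y) = lt X * (x * lu X - y * lu Y) - lu X * (x * lt X - y * lt Y)
    by rewrite /det2 /dir /=; ring.
  by rewrite e1 e2 !mulr0 subrr.
Qed.

Lemma diag_gen (P Q : point K) X Y (x y : K) d : Lp X P = 0 -> Lp Y P = 0 ->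
  x * Lp X Q = y * Lp Y Q ->
  x * (lt X * d.1 - lu X * d.2) = y * (lt Y * d.1 - lu Y * d.2) ->
  det2 (dir X) (dir Y) != 0 ->
  (x = 0 /\ y = 0) \/ det2 (Q.1 - P.1, Q.2 - P.2) d = 0.
Proof.
move=> hXP hYP hQ hd hD.
set w : (K * K)%type := (x * lt X - y * lt Y, - (x * lu X - y * lu Y)).
case: (boolP (w.1 == 0)) => [/eqP w1|w1]; last first.
  right; apply: (@orth2 w); last by left.
  - have -> : w.1 * (Q.1 - P.1) + w.2 * (Q.2 - P.2) =
       (x * Lp X Q - y * Lp Y Q) - (x * Lp X P - y * Lp Y P) by rewrite /w /Lp /=; ring.
    by rewrite hQ hXP hYP; ring.
  - have -> : w.1 * d.1 + w.2 * d.2 =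
       x * (lt X * d.1 - lu X * d.2) - y * (lt Y * d.1 - lu Y * d.2) by rewrite /w /=; ring.
    by rewrite hd; ring.
case: (boolP (w.2 == 0)) => [/eqP w2|w2]; last first.
  right; apply: (@orth2 w); last by right.
  - have -> : w.1 * (Q.1 - P.1) + w.2 * (Q.2 - P.2) =
       (x * Lp X Q - y * Lp Y Q) - (x * Lp X P - y * Lp Y P) by rewrite /w /Lp /=; ring.
    by rewrite hQ hXP hYP; ring.
  - have -> : w.1 * d.1 + w.2 * d.2 =
       x * (lt X * d.1 - lu X * d.2) - y * (lt Y * d.1 - lu Y * d.2) by rewrite /w /=; ring.
    by rewrite hd; ring.
left; apply: (w_zero hD) => //.
by move: w2; rewrite /w /= => /eqP; rewrite oppr_eq0 => /eqP.
Qed.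


Lemma par_of_det X l : det2 (dir X) (dir l) = 0 -> parallel l X.
Proof. by move=> h; rewrite par_cross det2_anti h oppr0. Qed.

Lemma deg_core (h2 : (2%:R : K) != 0) (hQ : quadrilateral A B A' B') l (sg tau : K) :
  sg != 0 ->
  (forall x, tau * EE A A' x (dir l) = sg * EE B B' x (dir l)) ->
  tau * N1 A A' (dir l) = sg * N1 B B' (dir l) ->
  tau * N2 A A' (dir l) = sg * N2 B B' (dir l) ->
  ~ (N1 B B' (dir l) = 0 /\ N2 B B' (dir l) = 0) ->
  parallel l (diag1 A B A' B') /\ parallel l (diag2 A B A' B').
Proof.
move=> hs hrel e1 e2 hNB.
case: hQ => _ hnc [/negP nAB /negP nBA' /negP nA'B' /negP nB'A].
have n2 : (- 2%:R : K) != 0 by rewrite oppr_eq0.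
have hab : tau * (det2 (dir A') (dir l) * det2 (dir A) (dir l)) =
           sg * (det2 (dir B') (dir l) * det2 (dir B) (dir l)).
  have : tau * (N1 A A' (dir l) * (dir l).1 + N2 A A' (dir l) * (dir l).2) =
         sg * (N1 B B' (dir l) * (dir l).1 + N2 B B' (dir l) * (dir l).2)
    by rewrite !mulrDr !mulrA e1 e2.
  rewrite !Nd => h; apply: (mulfI n2); by rewrite mulrCA h mulrCA.
have tau0 : tau != 0.
  apply/negP => /eqP t0; apply: hNB; move: e1 e2; rewrite t0 !mul0r.
  by move=> /esym/eqP; rewrite mulf_eq0 (negbTE hs) => /eqP -> /esym/eqP;
     rewrite mulf_eq0 (negbTE hs) => /eqP ->.
have LA1 := Lp_meet1 nAB; have LB1 := Lp_meet2 nAB.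
have LB2 := Lp_meet1 nBA'; have LA'2 := Lp_meet2 nBA'.
have LA'3 := Lp_meet1 nA'B'; have LB'3 := Lp_meet2 nA'B'.
have LB'4 := Lp_meet1 nB'A; have LA4 := Lp_meet2 nB'A.
rewrite /diag1 /diag2 /vtx1 /vtx2 /vtx3 /vtx4; split.
- apply: diag_par.
    move=> E; apply: hnc; exists (meet A B); split => //; rewrite E //.
  have h3 : (tau * det2 (dir A') (dir l)) * Lp A (meet A' B') =
            (sg * det2 (dir B') (dir l)) * Lp B (meet A' B').
    have := hrel (meet A' B'); rewrite !EE_exp LA'3 LB'3 !mul0r !addr0 => h.
    by rewrite -!mulrA [det2 (dir A') _ * _]mulrC [det2 (dir B') _ * _]mulrC h.
  have hd3 : (tau * det2 (dir A') (dir l)) * (lt A * (dir l).1 - lu A * (dir l).2) =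
             (sg * det2 (dir B') (dir l)) * (lt B * (dir l).1 - lu B * (dir l).2).
    have -> : (tau * det2 (dir A') (dir l)) * (lt A * (dir l).1 - lu A * (dir l).2) =
      - (tau * (det2 (dir A') (dir l) * det2 (dir A) (dir l))) by rewrite /det2 /dir /=; ring.
    have -> : (sg * det2 (dir B') (dir l)) * (lt B * (dir l).1 - lu B * (dir l).2) =
      - (sg * (det2 (dir B') (dir l) * det2 (dir B) (dir l))) by rewrite /det2 /dir /=; ring.
    by rewrite hab.
  case: (diag_gen LA1 LB1 h3 hd3 (npar nAB)) => [[/eqP x0 /eqP y0]|//].
  exfalso; move: x0 y0; rewrite !mulf_eq0 (negbTE hs) (negbTE tau0) /= => /eqP a0 /eqP b0.
  by move: nA'B'; rewrite (par_trans (par_sym (par_of_det a0)) (par_of_det b0)).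
- apply: diag_par.
    move=> E; apply: hnc; exists (meet B A'); split => //; rewrite E //.
  have h4 : (tau * det2 (dir A) (dir l)) * Lp A' (meet B' A) =
            (sg * det2 (dir B') (dir l)) * Lp B (meet B' A).
    have := hrel (meet B' A); rewrite !EE_exp LA4 LB'4 !mul0r !add0r !addr0 => h.
    by rewrite -!mulrA [det2 (dir A) _ * _]mulrC [det2 (dir B') _ * _]mulrC h.
  have hd4 : (tau * det2 (dir A) (dir l)) * (lt A' * (dir l).1 - lu A' * (dir l).2) =
             (sg * det2 (dir B') (dir l)) * (lt B * (dir l).1 - lu B * (dir l).2).
    have -> : (tau * det2 (dir A) (dir l)) * (lt A' * (dir l).1 - lu A' * (dir l).2) =
      - (tau * (det2 (dir A') (dir l) * det2 (dir A) (dir l))) by rewrite /det2 /dir /=; ring.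
    have -> : (sg * det2 (dir B') (dir l)) * (lt B * (dir l).1 - lu B * (dir l).2) =
      - (sg * (det2 (dir B') (dir l) * det2 (dir B) (dir l))) by rewrite /det2 /dir /=; ring.
    by rewrite hab.
  have nA'B : det2 (dir A') (dir B) != 0 by rewrite det2_anti oppr_eq0 npar.
  case: (diag_gen LA'2 LB2 h4 hd4 nA'B) => [[/eqP x0 /eqP y0]|//].
  exfalso; move: x0 y0; rewrite !mulf_eq0 (negbTE hs) (negbTE tau0) /= => /eqP a0 /eqP b0.
  by move: nB'A; rewrite (par_trans (par_sym (par_of_det b0)) (par_of_det a0)).
Qed.


Lemma deg (h2 : (2%:R : K) != 0) (hQ : quadrilateral A B A' B') l p :
  Dl (dir l) = 0 -> EE A A' p (dir l) = 0 -> EE B B' p (dir l) = 0 ->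
  [\/ parallel A A' /\ parallel l A, parallel B B' /\ parallel l B |
      parallel l (diag1 A B A' B') /\ parallel l (diag2 A B A' B')].
Proof.
move=> hD hA hB.
have [c1 c2] := cramer hA hB; rewrite hD !mul0r in c1 c2.
case: (boolP ((N1 A A' (dir l) == 0) && (N2 A A' (dir l) == 0))) => [/andP[/eqP a1 /eqP a2]|nA].
  by constructor 1; apply: N0_par.
case: (boolP ((N1 B B' (dir l) == 0) && (N2 B B' (dir l) == 0))) => [/andP[/eqP b1 /eqP b2]|nB].
  by constructor 2; apply: N0_par.
constructor 3.
have hNB : ~ (N1 B B' (dir l) = 0 /\ N2 B B' (dir l) = 0).
  by case=> b1 b2; move: nB; rewrite b1 b2 eqxx.
case: (boolP (N1 A A' (dir l) == 0)) => [/eqP a1|a1].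
- have a2 : N2 A A' (dir l) != 0 by move: nA; rewrite a1 eqxx.
  apply: (@deg_core h2 hQ l (N2 A A' (dir l)) (N2 B B' (dir l))) => //.
  + move=> x; apply/eqP; rewrite -subr_eq0; apply/eqP.
    have -> : N2 B B' (dir l) * EE A A' x (dir l) - N2 A A' (dir l) * EE B B' x (dir l) =
      Dl (dir l) * x.1 - P1 (dir l) by rewrite !EE_lin /Dl /P1; ring.
    by rewrite hD -c1 mul0r subrr.
  + apply/eqP; rewrite -subr_eq0; apply/eqP; rewrite -hD /Dl; ring.
  + by rewrite mulrC.
- apply: (@deg_core h2 hQ l (N1 A A' (dir l)) (N1 B B' (dir l))) => //.
  + move=> x; apply/eqP; rewrite -subr_eq0; apply/eqP.
    have -> : N1 B B' (dir l) * EE A A' x (dir l) - N1 A A' (dir l) * EE B B' x (dir l) =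
      - Dl (dir l) * x.2 + P2 (dir l) by rewrite !EE_lin /Dl /P2; ring.
    by rewrite hD -c2 oppr0 mul0r addr0.
  + by rewrite mulrC.
  + apply/eqP; rewrite -subr_eq0; apply/eqP; rewrite -[0]oppr0 -hD /Dl; ring.
Qed.


Lemma midpt_mstar (h2 : (2%:R : K) != 0) m : midpt m (mstar m) = cen.
Proof.
rewrite /midpt /mstar; case: cen => c1 c2 /=.
by congr pair; field.
Qed.

Lemma mid_mstar (h2 : (2%:R : K) != 0) m1 m2 : midpt m1 m2 = cen -> m2 = mstar m1.
Proof.
rewrite /mstar => <-; rewrite /midpt /=; case: m2 => x y /=.
by congr pair; field.
Qed.

Lemma mstar_cen : mstar cen = cen.
Proof. by rewrite /mstar; case: cen => c1 c2 /=; congr pair; ring. Qed.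

Lemma qzero (h2 : (2%:R : K) != 0) (hQ : quadrilateral A B A' B') p : GG p = 0 ->
  [/\ qf (psi A A' p) (psi A A' (mstar p)) = 0, qf (psi B B' p) (psi B B' (mstar p)) = 0,
      qf (psi A A' p) (psi B B' (mstar p)) = 0 & qf (psi B B' p) (psi A A' (mstar p)) = 0].
Proof.
move=> G0.
case: hQ => _ _ [/negP/npar nAB /negP/npar nBA' /negP/npar nA'B' /negP/npar nB'A].
move: nAB nBA' nA'B' nB'A; rewrite /det2 /dir /= => nAB nBA' nA'B' nB'A.
by split; rewrite ?(id_AA h2 nAB nBA' nA'B' nB'A) ?(id_BB h2 nAB nBA' nA'B' nB'A)
  ?(id_AB h2 nAB nBA' nA'B' nB'A) ?(id_BA h2 nAB nBA' nA'B' nB'A) G0 mulr0.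
Qed.

Lemma psi_nz_or (h2 : (2%:R : K) != 0) (hQ : quadrilateral A B A' B') p :
  nz (psi A A' p) \/ nz (psi B B' p) \/
  [/\ psi A A' p = (0, 0), psi B B' p = (0, 0) & p = cen].
Proof.
case: (classic (nz (psi A A' p))) => hA; first by left.
case: (classic (nz (psi B B' p))) => hB; first by right; left.
right; right.
have z : forall v : (K * K)%type, ~ nz v -> v.1 = 0 /\ v.2 = 0.
  move=> v hv; split; apply/eqP; case: (boolP (_ == 0)) => // h; exfalso; apply: hv; by [left|right].
have [a1 a2] := z _ hA; have [b1 b2] := z _ hB.
split; last exact: sing_cen.
- by move: a1 a2; case: (psi A A' p) => x y /= -> ->.
- by move: b1 b2; case: (psi B B' p) => x y /= -> ->.
Qed.

End Quad.

End Aux.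

Theorem corollary6p5 (K : fieldType) (hK : (2%:R : K) != 0)
    (A B A' B' : line K) (hQ : quadrilateral A B A' B') :
  (forall l1 l2 : line K,
     bisector A B A' B' l1 -> bisector A B A' B' l2 ->
     Qorthogonal A B A' B' l1 l2 ->
     ~ both_par_to_parallel_pair A B A' B' l1 l2 ->
     Qantipodal A B A' B' l1 l2 /\ Qpair A B A' B' l1 l2) /\
  (forall l1 l2 : line K,
     bisector A B A' B' l1 -> bisector A B A' B' l2 ->
     Qantipodal A B A' B' l1 l2 ->
     ~ (exists m, bisector_mid A B A' B' l1 m /\ bisector_mid A B A' B' l2 m) ->
     Qorthogonal A B A' B' l1 l2 /\ Qpair A B A' B' l1 l2).
Proof.
have hQ' := hQ.
case: hQ' => _ hnc [/negP/npar nAB /negP/npar nBA' /negP/npar nA'B' /negP/npar nB'A].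
have dq : qalpha A B A' B' * qgamma A B A' B' - qbeta A B A' B' ^+ 2 != 0.
  by rewrite detq oppr_eq0 !mulf_neq0.
have EEdet : forall (X Y : line K) (p : point K) (d : (K * K)%type), EE X Y p d = det2 (psi X Y p) d by [].
have EE0 : forall (X Y : line K) (p : point K) (d : (K * K)%type), psi X Y p = (0, 0) -> EE X Y p d = 0.
  by move=> X Y p d h; rewrite EEdet h /det2 /= !mul0r subrr.
split.
- move=> l1 l2 b1 b2 ho hex.
  have [m1 bm1] := bis_some hQ b1; have [m2 bm2] := bis_some hQ b2.
  have [_ eA1 eB1] := bis_eqs hK bm1; have [_ eA2 eB2] := bis_eqs hK bm2.
  have ho' : qf A B A' B' (dir l1) (dir l2) = 0 by exact: ho.
  suff E : m2 = mstar A B A' B' m1.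
    have anti : Qantipodal A B A' B' l1 l2.
      by exists m1, m2; split => //; rewrite E midpt_mstar.
    by split => //; split.
  have G1 : GG A B A' B' m1 = 0 := det2_com eA1 eB1 (dir_nz l1).
  have [qAA qBB qAB qBA] := qzero hK hQ G1.
  have k : forall v X Y, det2 v (dir l1) = 0 -> nz v ->
      qf A B A' B' v (psi X Y (mstar A B A' B' m1)) = 0 ->
      EE X Y (mstar A B A' B' m1) (dir l2) = 0.
    move=> v X Y hv nv hq.
    have h' := qscale hv nv hq.
    by rewrite EEdet det2_anti (qkernel (dir_nz l1) dq ho' h') oppr0.
  have [EsA EsB] : EE A A' (mstar A B A' B' m1) (dir l2) = 0 /\
                   EE B B' (mstar A B A' B' m1) (dir l2) = 0.
    case: (psi_nz_or hK hQ m1) => [nzA|[nzB|[zA zB mc]]].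
    + by split; apply: (k _ _ _ eA1 nzA).
    + by split; apply: (k _ _ _ eB1 nzB).
    + have -> : mstar A B A' B' m1 = m1 by rewrite {1}mc mstar_cen.
      by split; apply: EE0.
  have [s1 s2] := cramer EsA EsB; have [t1 t2] := cramer eA2 eB2.
  case: (boolP (Dl A B A' B' (dir l2) == 0)) => [/eqP hD|hD]; last first.
    have E1 : m2.1 = (mstar A B A' B' m1).1 by apply: (mulfI hD); rewrite t1 s1.
    have E2 : m2.2 = (mstar A B A' B' m1).2 by apply: (mulfI hD); rewrite t2 s2.
    exact: injective_projections E1 E2.
  exfalso; apply: hex.
  have q22 : qf A B A' B' (dir l2) (dir l2) = 0.
    apply/eqP; move: hD; rewrite Dl_q => /eqP; rewrite mulf_eq0 oppr_eq0 (negbTE hK) /=.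
    by [].
  have p12 : parallel l1 l2.
    rewrite par_cross det2_anti (qkernel (dir_nz l2) dq q22 _) ?oppr0 //.
    by rewrite qf_sym.
  case: (deg hK hQ hD eA2 eB2) => [[pAA' p2A]|[pBB' p2B]|[pd1 pd2]].
  + by constructor 1; split => //; apply: par_trans p12 p2A.
  + by constructor 2; split => //; apply: par_trans p12 p2B.
  + constructor 3; split => //; first by apply: par_trans (par_sym pd1) pd2.
    by apply: par_trans p12 pd1.
- move=> l1 l2 b1 b2 [m1 [m2 [bm1 bm2 hmid]]] hns.
  have E := mid_mstar hK hmid.
  have ne : m1 <> m2 by move=> e; apply: hns; exists (Some m1); split => //; rewrite e.
  have [_ eA1 eB1] := bis_eqs hK bm1; have [_ eA2 eB2] := bis_eqs hK bm2.
  have G1 : GG A B A' B' m1 = 0 := det2_com eA1 eB1 (dir_nz l1).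
  have [qAA qBB qAB qBA] := qzero hK hQ G1.
  rewrite -E in qAA qBB qAB qBA.
  have fin : forall v w, det2 v (dir l1) = 0 -> nz v -> det2 w (dir l2) = 0 -> nz w ->
      qf A B A' B' v w = 0 -> qf A B A' B' (dir l1) (dir l2) = 0.
    move=> v w hv nv hw nw h.
    have h1 := qscale hv nv h; rewrite qf_sym in h1.
    by have := qscale hw nw h1; rewrite qf_sym.
  have ho : qf A B A' B' (dir l1) (dir l2) = 0.
    have c2f : m2 = cen A B A' B' -> False.
      move=> c2; apply: ne; move: E; rewrite c2 => E.
      by have := congr1 (mstar A B A' B') E; rewrite mstar_cen /mstar /= => ->;
         case: (m1) => x y /=; congr pair; ring.
    case: (psi_nz_or hK hQ m1) => [nzA|[nzB|[_ _ c1]]].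
    + case: (psi_nz_or hK hQ m2) => [nzA2|[nzB2|[_ _ c2]]].
      * exact: (fin _ _ eA1 nzA eA2 nzA2 qAA).
      * exact: (fin _ _ eA1 nzA eB2 nzB2 qAB).
      * by exfalso; apply: c2f.
    + case: (psi_nz_or hK hQ m2) => [nzA2|[nzB2|[_ _ c2]]].
      * exact: (fin _ _ eB1 nzB eA2 nzA2 qBA).
      * exact: (fin _ _ eB1 nzB eB2 nzB2 qBB).
      * by exfalso; apply: c2f.
    + by exfalso; apply: ne; rewrite E c1 mstar_cen.
  by split => //; split => //; exists m1, m2.
Qed.
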